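(* Let $G\curvearrowright X$ be a Borel action of a countable group on a standard Borel space. If for every $x\in X$ the stabilizer $\mathrm{Stab}_G(x)$ is uniformly coamenable in $G$, then the orbit equivalence relation $E_G^X$ is Borel amenable.
   Context: For a set $A$, $\mathrm{Prob}(A)$ is the set of nonnegative $p\in\ell^1(A)$ with $\|p\|_1=1$. For an action $G\curvearrowright Y$, $p\in\mathrm{Prob}(G)$ and $y\in Y$, $py\in\mathrm{Prob}(G\cdot y)$ denotes the pushforward of $p$ under $g\mapsto gy$. Given a finite $S\subseteq G$ and $\varepsilon>0$, an $(S,\varepsilon)$-Reiter function for $G\curvearrowright Y$ is some $p\in\mathrm{Prob}(G)$ such that $\|py-psy\|_1<\varepsilon$ for all $s\in S$ and all $y\in Y$. A subgroup $H\le G$ is uniformly coamenable if for every finite $S\subseteq G$ and every $\varepsilon>0$ the action $G\curvearrowright G/H$ has an $(S,\varepsilon)$-Reiter function. A CBER $E$ on $X$ is Borel amenable if there is a sequence $(p_i)_{i\in\mathbb N}$, each $p_i$ assigning to every $x\in X$ some $p^x_i\in\mathrm{Prob}([x]_E)$, such that for every $(x,y)\in E$ and $\varepsilon>0$, for all but finitely many $i$, $\|p_i^x-p_i^y\|_1<\varepsilon$, and such that for each $i$ the map $E\to\mathbb R$, $(x,y)\mapsto p_i^x(\{y\})$ is Borel. *)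

(* Defs.v *)
From HB Require Import structures.
From mathcomp Require Import all_boot all_order all_algebra.
From mathcomp Require Import all_classical all_reals all_analysis.
From mathcomp Require Import Rstruct Rstruct_topology.
From Stdlib Require Import Rdefinitions.

Set Implicit Arguments.
Unset Strict Implicit.
Unset Printing Implicit Defensive.

Import Order.TTheory GRing.Theory Num.Theory.
Local Open Scope classical_set_scope.
Local Open Scope ring_scope.

Definition RR : realType := Rdefinitions.R.

Definition ell1_dist (T : choiceType) (p q : T -> \bar RR) : \bar RR :=
  (\esum_(t in [set: T]) `|p t - q t|)%E.

Definition is_prob (A : choiceType) (p : A -> RR) : Prop :=
  (forall a, 0 <= p a) /\ (\esum_(a in [set: A]) (p a)%:E)%E = 1%E.

Definition pushforward (G : choiceType) (Y : Type) (p : G -> RR) (f : G -> Y) : Y -> \bar RR :=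
  fun y => (\esum_(g in f @^-1` [set y]) (p g)%:E)%E.

Local Open Scope group_scope.

Definition reiter_function (G : groupType) (Y : choiceType) (act : G -> Y -> Y)
    (D : set Y) (S : set G) (eps : RR) (p : G -> RR) : Prop :=
  is_prob p /\
  forall s, S s -> forall y, D y ->
    (ell1_dist (pushforward p (fun g => act g y))
               (pushforward p (fun g => act g (act s y))) < eps%:E)%E.

Definition lcoset (G : groupType) (H : set G) (a : G) : set G :=
  [set a * h | h in H].
Definition coset_space (G : groupType) (H : set G) : set (set G) :=
  range (lcoset H).
Definition coset_act (G : groupType) (g : G) (Z : set G) : set G :=
  [set g * z | z in Z].

Definition uniformly_coamenable (G : groupType) (H : set G) : Prop :=
  forall S : set G, finite_set S -> forall eps : RR, (0 < eps)%R ->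
    exists p : G -> RR,
      reiter_function (@coset_act G) (coset_space H) S eps p.

Definition stabilizer (G : groupType) (X : Type) (act : G -> X -> X) (x : X)
  : set G := [set g | act g x = x].

Definition borel_action (G : groupType) (d : measure_display)
    (X : measurableType d) (act : G -> X -> X) : Prop :=
  (forall x, act 1 x = x) /\
  (forall g h x, act (g * h) x = act g (act h x)) /\
  (forall g, measurable_fun [set: X] (act g)).

Definition standard_borel (d : measure_display) (X : measurableType d) : Prop :=
  exists f : X -> RR,
    injective f /\ measurable_fun [set: X] f /\ measurable (range f) /\
    (forall A : set X, measurable A -> measurable (f @` A)).

Definition orbit_eqrel (G : groupType) (X : Type) (act : G -> X -> X)
  : set (X * X) := [set xy | exists g, act g xy.1 = xy.2].

Local Close Scope group_scope.

(* Borel amenability of a (countable Borel) equivalence relation E on X.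
   p i x is p_i^x, a function X -> R vanishing outside [x]_E. *)
Definition borel_amenable (d : measure_display) (X : measurableType d)
    (E : set (X * X)) : Prop :=
  exists p : nat -> X -> X -> RR,
    (forall i x,
        (forall y, 0 <= p i x y) /\
        (forall y, ~ E (x, y) -> p i x y = 0) /\
        (\esum_(y in [set y | E (x, y)]) (p i x y)%:E)%E = 1%E) /\
    (forall x y, E (x, y) -> forall eps : RR, 0 < eps ->
        exists N : nat, forall i : nat, leq N i ->
          (ell1_dist (fun z => (p i x z)%:E) (fun z => (p i y z)%:E) < eps%:E)%E) /\
    (forall i, measurable_fun E (fun xy : X * X => p i xy.1 xy.2)).

(* Main.v *)
Require Import Defs.
From HB Require Import structures.
From mathcomp Require Import all_boot all_order all_algebra.
From mathcomp Require Import all_classical all_reals all_analysis.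
From mathcomp Require Import Rstruct Rstruct_topology.
From mathcomp Require Import ring lra.
From mathcomp Require Import measurable_realfun measurable_fun_approximation.
Require Import Defs.
Set Implicit Arguments.
Unset Strict Implicit.
Unset Printing Implicit Defensive.
Import Order.TTheory GRing.Theory Num.Theory.
Local Open Scope classical_set_scope.
Local Open Scope ring_scope.

Local Open Scope ereal_scope.

Lemma esum_le_setT (T : choiceType) (A : set T) (f : T -> \bar RR) :
  (forall t, 0 <= f t) -> \esum_(t in A) f t <= \esum_(t in [set: T]) f t.
Proof.
move=> f0; rewrite (esumID A [set: T]) //; rewrite setTI.
by apply: leeDl; apply: esum_ge0.
Qed.

Lemma esum_point (T : choiceType) (A : set T) (a : T) (f : T -> \bar RR) :
  (forall y, y <> a -> f y = 0) -> 0 <= f a -> A a ->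
  \esum_(y in A) f y = f a.
Proof.
move=> f0 fa0 Aa; rewrite (esumID [set a] A); last first.
  move=> t _; have [->//|ta] := eqVneq t a; by rewrite f0 //; exact/eqP.
rewrite [X in _ + X]esum1; last by move=> t [_ /= /eqP ta]; apply: f0; apply/eqP.
rewrite adde0 (_ : A `&` [set a] = [set a]) ?esum_set1 //.
by apply/seteqP; split=> [t [] //|t /= ->].
Qed.

Lemma esum_point0 (T : choiceType) (A : set T) (a : T) (f : T -> \bar RR) :
  (forall y, y <> a -> f y = 0) -> ~ A a -> \esum_(y in A) f y = 0.
Proof. by move=> f0 nA; apply: esum1 => t At; apply: f0 => ta; apply: nA; rewrite -ta. Qed.

Lemma esum_partition (Y W : choiceType) (Psi : Y -> W) (D : set W)
  (f : Y -> \bar RR) : (forall y, 0 <= f y) ->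
  \esum_(w in D) \esum_(y in Psi @^-1` [set w]) f y =
  \esum_(y in Psi @^-1` D) f y.
Proof.
move=> f0; rewrite esum_esum; last by move=> *; apply: f0.
rewrite (reindex_esum (Psi @^-1` D) _ (fun y => (Psi y, y))) //.
split.
- by move=> y Dy; split.
- by move=> y1 y2 _ _ [_ ->].
- move=> [w y] [/= Dw]; rewrite /preimage/= => yw; subst w; by exists y.
Qed.

Lemma abs_le_fin (A B C : \bar RR) : A \is a fin_num -> B \is a fin_num ->
  A <= B + C -> B <= A + C -> `|A - B| <= C.
Proof.
move: A B => [a| |] [b| |] //= _ _.
case: C => [c| |] //=; rewrite ?lee_fin => h1 h2.
  by rewrite ler_norml; apply/andP; split; lra.
by rewrite leey.
Qed.

Lemma le_add_abs (a b : \bar RR) : 0 <= a -> 0 <= b -> a <= b + `|a - b|.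
Proof.
move: a b => [a| |] [b| |] //=; rewrite ?lee_fin => a0 b0.
- have := ler_norm (a - b); lra.
- by rewrite leey.
Qed.

Lemma le_add_abs2 (a b : \bar RR) : 0 <= a -> 0 <= b -> b <= a + `|a - b|.
Proof.
move: a b => [a| |] [b| |] //=; rewrite ?lee_fin => a0 b0.
- rewrite distrC; have := ler_norm (b - a); lra.
- by rewrite leey.
Qed.

Lemma contraction_pt (T : choiceType) (F : set T) (a b : T -> \bar RR) :
  (forall t, 0 <= a t) -> (forall t, 0 <= b t) ->
  \esum_(t in F) a t \is a fin_num -> \esum_(t in F) b t \is a fin_num ->
  `| \esum_(t in F) a t - \esum_(t in F) b t | <= \esum_(t in F) `|a t - b t|.
Proof.
move=> a0 b0 fa fb; apply: abs_le_fin => //.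
- rewrite -esumD //.
  by apply: le_esum => t _; apply: le_add_abs.
- rewrite -esumD //.
  by apply: le_esum => t _; apply: le_add_abs2.
Qed.

Lemma contraction (Y W : choiceType) (Psi : Y -> W) (a b : Y -> \bar RR) :
  (forall t, 0 <= a t) -> (forall t, 0 <= b t) ->
  (forall w, \esum_(t in Psi @^-1` [set w]) a t \is a fin_num) ->
  (forall w, \esum_(t in Psi @^-1` [set w]) b t \is a fin_num) ->
  ell1_dist (fun w => \esum_(t in Psi @^-1` [set w]) a t)
            (fun w => \esum_(t in Psi @^-1` [set w]) b t) <= ell1_dist a b.
Proof.
move=> a0 b0 fa fb; rewrite /ell1_dist.
apply: le_trans (_ : \esum_(w in [set: W]) \esum_(t in Psi @^-1` [set w]) `|a t - b t| <= _).
  by apply: le_esum => w _; apply: contraction_pt.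
by rewrite esum_partition // => t; rewrite abse_ge0.
Qed.

Lemma push_comp (G Y W : choiceType) (p : G -> RR) (pi : G -> Y) (Psi : Y -> W) w :
  (forall g, (0 <= p g)%R) ->
  pushforward p (fun g => Psi (pi g)) w =
  \esum_(y in Psi @^-1` [set w]) pushforward p pi y.
Proof.
move=> p0; rewrite /pushforward esum_partition //.
Qed.

Lemma push_ge0 (G Y : choiceType) (p : G -> RR) (f : G -> Y) y :
  (forall g, (0 <= p g)%R) -> 0 <= pushforward p f y.
Proof. by move=> p0; apply: esum_ge0 => g _; rewrite lee_fin. Qed.

Lemma push_le1 (G Y : choiceType) (p : G -> RR) (f : G -> Y) y :
  is_prob p -> pushforward p f y <= 1.
Proof.
move=> [p0 p1]; rewrite -p1 /pushforward; apply: esum_le_setT.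
by move=> g; rewrite lee_fin.
Qed.

Lemma push_fin (G Y : choiceType) (p : G -> RR) (f : G -> Y) y :
  is_prob p -> pushforward p f y \is a fin_num.
Proof.
move=> pp; rewrite ge0_fin_numE; last by apply: push_ge0; case: pp.
by apply: (le_lt_trans (push_le1 f y pp)); rewrite ltey.
Qed.

Definition ell1R (T : choiceType) (f g : T -> RR) : \bar RR :=
  ell1_dist (fun t => (f t)%:E) (fun t => (g t)%:E).

Lemma ell1RE (T : choiceType) (f g : T -> RR) :
  ell1R f g = \esum_(t in [set: T]) (`|f t - g t|%R)%:E.
Proof. by []. Qed.

Lemma ell1R_ge0 (T : choiceType) (f g : T -> RR) : 0 <= ell1R f g.
Proof. by rewrite ell1RE; apply: esum_ge0 => t _; rewrite lee_fin. Qed.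

Lemma ell1R_sym (T : choiceType) (f g : T -> RR) : ell1R f g = ell1R g f.
Proof. by rewrite !ell1RE; apply: eq_esum => t _; rewrite distrC. Qed.

Lemma ell1R_tri (T : choiceType) (f g h : T -> RR) :
  ell1R f h <= ell1R f g + ell1R g h.
Proof.
rewrite !ell1RE -esumD; last 2 first.
- by move=> t _; rewrite lee_fin.
- by move=> t _; rewrite lee_fin.
apply: le_esum => t _; rewrite -EFinD lee_fin.
by rewrite (le_trans _ (ler_normD _ _)) // addrA subrK.
Qed.

Local Open Scope ereal_scope.

Section Setup.
Variables (G : groupType) (dec : nat -> G).
Hypothesis dec_surj : forall g, exists m, dec m = g.
Variables (d : measure_display) (X : measurableType d) (act : G -> X -> X).
Hypothesis act1 : forall x, act 1%g x = x.
Hypothesis actM : forall g h x, act (g * h)%g x = act g (act h x).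

Definition Kw (l : seq (nat * nat)) : RR := (\sum_(e <- l) (e.2)%:R)%R.
Definition nu (l : seq (nat * nat)) (z w : X) : RR :=
  (\sum_(e <- l) ((e.2)%:R / Kw l) * (act (dec e.1) z == w)%:R)%R.
Definition Dl l z (s : G) : \bar RR := ell1R (nu l z) (nu l (act s z)).
Definition eps_ (i : nat) : RR := ((i.+1)%:R)^-1%R.
Definition Good (i : nat) l x : Prop := (0 < Kw l)%R /\
  forall m j, (j <= i)%N -> Dl l (act (dec m) x) (dec j) < (eps_ i)%:E.
Definition decL (n : nat) : seq (nat * nat) := odflt [::] (unpickle n).

Lemma decL_pickle l : decL (pickle l) = l.
Proof. by rewrite /decL pickleK. Qed.

Lemma Kw_ge0 l : (0 <= Kw l)%R.
Proof. by apply: sumr_ge0 => e _; rewrite ler0n. Qed.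

Lemma nu_ge0 l z w : (0 <= nu l z w)%R.
Proof.
apply: sumr_ge0 => e _; apply: mulr_ge0; last by rewrite ler0n.
by apply: divr_ge0; [rewrite ler0n | apply: Kw_ge0].
Qed.

Lemma nu_off l z w : (forall e, e \in l -> act (dec e.1) z <> w) -> nu l z w = 0%R.
Proof.
move=> h; rewrite /nu big_seq big1 // => e el.
by have /eqP/negbTE -> := h e el; rewrite mulr0.
Qed.

Lemma esum_nu l z (A : set X) : (0 < Kw l)%R ->
  (forall e, e \in l -> A (act (dec e.1) z)) ->
  \esum_(w in A) (nu l z w)%:E = 1.
Proof.
move=> K0 hA; rewrite /nu.
under eq_esum do rewrite -sumEFin.
rewrite esum_sum; last first.
  move=> w e _ _; rewrite lee_fin; apply: mulr_ge0; last by rewrite ler0n.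
  by apply: divr_ge0; [rewrite ler0n | apply: Kw_ge0].
rewrite big_seq.
rewrite (eq_bigr (fun e => ((e.2)%:R / Kw l)%:E)); last first.
  move=> e el; rewrite (esum_point (a := act (dec e.1) z)).
  - by rewrite eqxx mulr1.
  - by move=> y /nesym /eqP /negbTE ->; rewrite mulr0.
  - rewrite lee_fin; apply: mulr_ge0; last by rewrite ler0n.
    by apply: divr_ge0; [rewrite ler0n | apply: Kw_ge0].
  - exact: hA.
rewrite sumEFin -big_seq -mulr_suml -/(Kw l) divff //.
by rewrite gt_eqF.
Qed.

Lemma Good_act i l x h : Good i l x -> Good i l (act h x).
Proof.
move=> [K0 H]; split => // m j ji.
have [m' e] := dec_surj (dec m * h)%g.
by rewrite -actM -e; apply: H.
Qed.

Lemma Good_actV i l x h : Good i l (act h x) -> Good i l x.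
Proof.
move=> /(Good_act (h^-1)%g); rewrite -actM mulVg act1 //.
Qed.

Definition kk (i : nat) (x : X) : nat :=
  if pselect (exists n, `[< Good i (decL n) x >]) is left e then ex_minn e else 0%N.

Lemma kk_spec i x : (exists n, Good i (decL n) x) ->
  Good i (decL (kk i x)) x /\ forall n, Good i (decL n) x -> (kk i x <= n)%N.
Proof.
move=> [n0 g0]; rewrite /kk; case: pselect => [e|]; last first.
  by case; exists n0; apply/asboolP.
case: ex_minnP => n /asboolP gn hmin; split => // n' gn'.
by apply: hmin; apply/asboolP.
Qed.

Lemma kk_act i x h : (exists n, Good i (decL n) x) -> kk i (act h x) = kk i x.
Proof.
move=> ex.
have ex' : exists n, Good i (decL n) (act h x).
  by case: ex => n gn; exists n; apply: Good_act.
have [g1 m1] := kk_spec ex; have [g2 m2] := kk_spec ex'.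
apply/eqP; rewrite eqn_leq; apply/andP; split.
- by apply: m2; apply: Good_act.
- by apply: m1; apply: Good_actV g2.
Qed.

End Setup.

Local Open Scope ereal_scope.

Section Transfer.
Variables (G : groupType) (d : measure_display) (X : measurableType d)
  (act : G -> X -> X).
Hypothesis act1 : forall x, act 1%g x = x.
Hypothesis actM : forall g h x, act (g * h)%g x = act g (act h x).

Lemma coset_act_lcoset (H : set G) g a :
  coset_act g (lcoset H a) = lcoset H (g * a)%g.
Proof.
apply/seteqP; split.
- by move=> _ [_ [h Hh <-] <-]; exists h => //; rewrite mulgA.
- move=> _ [h Hh <-]; exists (a * h)%g; first by exists h.
  by rewrite mulgA.
Qed.

Definition Psi (x : X) (Y : set G) : X :=
  if pselect (exists b, Y = lcoset (stabilizer act x) b) is left e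
  then act (projT1 (cid e)) x else x.

Lemma Psi_lcoset x b : Psi x (lcoset (stabilizer act x) b) = act b x.
Proof.
rewrite /Psi; case: pselect => [e|]; last by case; exists b.
case: (cid e) => b' /= hb.
have : lcoset (stabilizer act x) b b' by rewrite hb; exists 1%g; [exact: act1 | rewrite mulg1].
by case=> h hh <-; rewrite actM hh.
Qed.

Definition muR (p : G -> RR) (z : X) (w : X) : RR :=
  fine (pushforward p (fun g => act g z) w).

Lemma ell1R_mu p z z' : is_prob p ->
  ell1R (muR p z) (muR p z') =
  ell1_dist (pushforward p (fun g => act g z)) (pushforward p (fun g => act g z')).
Proof.
move=> pp; rewrite /ell1R /muR; congr ell1_dist; apply: funext => w;
by rewrite fineK //; apply: push_fin.
Qed.

Lemma transfer p x a s : is_prob p ->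
  ell1R (muR p (act a x)) (muR p (act s (act a x))) <=
  ell1_dist (pushforward p (fun g => coset_act g (lcoset (stabilizer act x) a)))
   (pushforward p (fun g => coset_act g (coset_act s (lcoset (stabilizer act x) a)))).
Proof.
move=> pp; have p0 := pp.1.
rewrite ell1R_mu //.
have E1 : (fun g => act g (act a x)) =
    (fun g => Psi x (coset_act g (lcoset (stabilizer act x) a))).
  by apply: funext => g; rewrite coset_act_lcoset Psi_lcoset actM.
have E2 : (fun g => act g (act s (act a x))) =
    (fun g => Psi x (coset_act g (coset_act s (lcoset (stabilizer act x) a)))).
  by apply: funext => g; rewrite !coset_act_lcoset Psi_lcoset !actM.
rewrite E1 E2.
have -> : pushforward p (fun g => Psi x (coset_act g (lcoset (stabilizer act x) a))) =
  (fun w => \esum_(y in Psi x @^-1` [set w])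
     pushforward p (fun g => coset_act g (lcoset (stabilizer act x) a)) y).
  by apply: funext => w; rewrite push_comp.
have -> : pushforward p (fun g => Psi x (coset_act g (coset_act s (lcoset (stabilizer act x) a)))) =
  (fun w => \esum_(y in Psi x @^-1` [set w])
     pushforward p (fun g => coset_act g (coset_act s (lcoset (stabilizer act x) a))) y).
  by apply: funext => w; rewrite push_comp.
apply: contraction.
- by move=> t; apply: push_ge0.
- by move=> t; apply: push_ge0.
- by move=> w; rewrite -push_comp //; apply: push_fin.
- by move=> w; rewrite -push_comp //; apply: push_fin.
Qed.

End Transfer.

Local Open Scope ereal_scope.

Lemma asbool_eqb (T : eqType) (a b : T) : `[< a = b >] = (a == b).
Proof. by apply/asboolP/eqP. Qed.

Section Approx.
Variables (G : groupType) (dec : nat -> G).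
Hypothesis dec_surj : forall g, exists m, dec m = g.
Variables (d : measure_display) (X : measurableType d) (act : G -> X -> X).

Definition cw (l : seq (nat * nat)) (g : G) : RR :=
  (\sum_(e <- l) ((e.2)%:R / Kw l) * (dec e.1 == g)%:R)%R.

Lemma cw_ge0 l g : (0 <= cw l g)%R.
Proof.
apply: sumr_ge0 => e _; apply: mulr_ge0; last by rewrite ler0n.
by apply: divr_ge0; [rewrite ler0n | apply: Kw_ge0].
Qed.

Lemma esum_cw l (A : set G) :
  \esum_(g in A) (cw l g)%:E =
  (\sum_(e <- l) ((e.2)%:R / Kw l) * (`[< A (dec e.1) >])%:R)%R%:E.
Proof.
rewrite /cw; under eq_esum do rewrite -sumEFin.
rewrite esum_sum; last first.
  move=> w e _ _; rewrite lee_fin; apply: mulr_ge0; last by rewrite ler0n.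
  by apply: divr_ge0; [rewrite ler0n | apply: Kw_ge0].
rewrite -sumEFin; apply: eq_bigr => e _.
have hge : 0 <= (((e.2)%:R / Kw l) * (dec e.1 == dec e.1)%:R)%R%:E.
  rewrite lee_fin; apply: mulr_ge0; last by rewrite ler0n.
  by apply: divr_ge0; [rewrite ler0n | apply: Kw_ge0].
have hoff : forall y, y <> dec e.1 ->
    (((e.2)%:R / Kw l) * (dec e.1 == y)%:R)%R%:E = 0.
  by move=> y /nesym /eqP /negbTE ->; rewrite mulr0.
case: (pselect (A (dec e.1))) => hA.
- by rewrite (esum_point hoff hge hA) eqxx asboolT.
- by rewrite (esum_point0 hoff hA) asboolF // mulr0.
Qed.

Lemma fin_contr l p z : is_prob p ->
  ell1R (nu dec act l z) (muR act p z) <= ell1R (cw l) p.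
Proof.
move=> pp; have p0 := pp.1.
have E1 : (fun w => (nu dec act l z w)%:E) =
   (fun w => \esum_(g in (fun g => act g z) @^-1` [set w]) (cw l g)%:E).
  apply: funext => w; rewrite esum_cw; congr EFin; apply: eq_bigr => e _.
  by rewrite asbool_eqb.
have E2 : (fun w => (muR act p z w)%:E) =
   (fun w => \esum_(g in (fun g => act g z) @^-1` [set w]) (p g)%:E).
  by apply: funext => w; rewrite /muR fineK //; apply: push_fin.
rewrite /ell1R E1 E2; apply: contraction.
- by move=> t; rewrite lee_fin cw_ge0.
- by move=> t; rewrite lee_fin.
- by move=> w; rewrite esum_cw.
- by move=> w; apply: (push_fin (fun g => act g z) w pp).
Qed.

End Approx.

Local Open Scope ereal_scope.

Lemma sum1_seq (T : Type) (s : seq T) : (\sum_(g <- s) (1 : RR))%R = (size s)%:R.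
Proof.
elim: s => [|a s IH]; first by rewrite big_nil.
by rewrite big_cons IH /= -add1n natrD.
Qed.

Section Approx2.
Variables (G : groupType) (dec : nat -> G).
Hypothesis dec_surj : forall g, exists m, dec m = g.

Definition enc (g : G) : nat := projT1 (cid (dec_surj g)).
Lemma encK g : dec (enc g) = g.
Proof. by rewrite /enc; case: cid. Qed.

Lemma approx (p : G -> RR) (del : RR) : is_prob p -> (0 < del)%R -> (del <= 1)%R ->
  exists l, (0 < Kw l)%R /\ ell1R (cw dec l) p < del%:E.
Proof.
move=> [p0 p1] del0 del1.
pose dl := (del / 5)%R.
have dl0 : (0 < dl)%R by rewrite /dl; lra.
have dl1 : (dl <= 1/5)%R by rewrite /dl; lra.
have : ((1 - dl)%:E < \esum_(g in [set: G]) (p g)%:E) by rewrite p1 lte_fin; lra.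
rewrite /esum => /ereal_sup_gt [_ [A [finA _] <-] hy].
rewrite fsbig_finite //= in hy.
set rs := finmap.enum_fset (fset_set A) in hy.
have urs : uniq rs by apply: finmap.fset_uniq.
rewrite sumEFin lte_fin in hy.
set P := (\sum_(g <- rs) p g)%R in hy.
have pE : forall g, (0 <= (p g)%:E) by move=> g; rewrite lee_fin.
have esP : \esum_(g in [set` rs]) (p g)%:E = P%:E.
  rewrite esum_fset; last by move=> *; exact: pE.
    by rewrite -fsbig_seq // sumEFin.
  exact: finite_seq.
have P1 : (P <= 1)%R.
  by rewrite -lee_fin -esP -p1; apply: esum_le_setT.
have hC := esumID [set` rs] [set: G] (fun g => (p g)%:E) (fun g _ => pE g).
rewrite !setTI p1 esP in hC.
set C := \esum_(g in ~` [set` rs]) (p g)%:E in hC.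
have C0 : 0 <= C by apply: esum_ge0.
have CE : C = (1 - P)%R%:E.
  move: C C0 hC => [c| |] //= c0; first by move=> [->]; congr EFin; lra.
pose n := size rs.
pose M := (Num.truncn (n%:R / dl)).+1.
have hM : (n%:R < M%:R * dl)%R.
  rewrite -ltr_pdivrMr //; exact: truncnS_gt.
pose k g := Num.truncn (M%:R * p g).
have hk : forall g, ((k g)%:R <= M%:R * p g < (k g).+1%:R)%R.
  by move=> g; apply: truncn_itv; apply: mulr_ge0 => //; rewrite ler0n.
pose l := [seq (enc g, k g) | g <- rs].
have KE : Kw l = (\sum_(g <- rs) (k g)%:R)%R by rewrite /Kw big_map.
have hk1 : forall g, ((k g)%:R <= M%:R * p g)%R by move=> g; case/andP: (hk g).
have hk2 : forall g, (M%:R * p g < (k g)%:R + 1)%R.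
  by move=> g; case/andP: (hk g) => _; rewrite -natr1.
have M0 : (0 < M%:R :> RR)%R by rewrite ltr0n.
have Kge : (M%:R * P - n%:R <= Kw l)%R.
  rewrite KE /P mulr_sumr -sum1_seq -sumrB; apply: ler_sum => g _.
  by have := hk2 g; lra.
have Kle : (Kw l <= M%:R * P)%R.
  by rewrite KE /P mulr_sumr; apply: ler_sum => g _; apply: hk1.
have h1 : (M%:R * (1 - dl) <= M%:R * P)%R by apply: ler_wpM2l; lra.
have h2 : (M%:R * dl <= M%:R * (1 - dl))%R by apply: ler_wpM2l; lra.
have K0 : (0 < Kw l)%R by lra.
exists l; split => //.
have cwE : forall g, cw dec l g = if g \in rs then ((k g)%:R / Kw l)%R else 0%R.
  move=> g; rewrite /cw big_map.
  under eq_bigr do rewrite encK.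
  case: ifP => h.
  - rewrite (bigD1_seq g h urs) /= eqxx mulr1 big1 ?addr0 // => g' /negbTE.
    by rewrite eq_sym => ->; rewrite mulr0.
  - rewrite big1_seq // => g' /= g'rs.
    have -> : (g' == g) = false by apply/negbTE; apply: contraFneq h => <-.
    by rewrite mulr0.
rewrite ell1RE (esumID [set` rs]); last by move=> *; rewrite lee_fin.
rewrite !setTI.
have -> : \esum_(g in ~` [set` rs]) (`|cw dec l g - p g|)%:E = C.
  apply: eq_esum => g /= /negP /negbTE h; rewrite cwE h sub0r normrN ger0_norm //.
rewrite CE esum_fset; last 2 first.
- exact: finite_seq.
- by move=> *; rewrite lee_fin.
rewrite -fsbig_seq // sumEFin -EFinD lte_fin.
rewrite big_seq (eq_bigr (fun g => `|(k g)%:R / Kw l - p g|)%R); last first.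
  by move=> g h; rewrite cwE h.
rewrite -big_seq.
set q := (Kw l / M%:R)%R.
have hq : (1 - 2 * dl < q)%R.
  rewrite /q ltr_pdivlMr //; lra.
have KleM : (Kw l <= M%:R)%R.
  apply: (le_trans Kle); rewrite -[X in (_ <= X)%R]mulr1; apply: ler_wpM2l; lra.
have hb : forall g, (`|(k g)%:R / Kw l - p g| <=
    ((k g)%:R / Kw l - (k g)%:R / M%:R) + (p g - (k g)%:R / M%:R))%R.
  move=> g.
  have c1 : ((k g)%:R / M%:R <= p g)%R by rewrite ler_pdivrMr // mulrC.
  have c2 : ((k g)%:R / M%:R <= (k g)%:R / Kw l)%R.
    apply: ler_wpM2l; first by rewrite ler0n.
    by rewrite lef_pV2 // posrE.
  rewrite ler_norml; apply/andP; split; lra.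
have hs : (\sum_(g <- rs) `|(k g)%:R / Kw l - p g| <=
   \sum_(g <- rs) ((k g)%:R / Kw l - (k g)%:R / M%:R) +
   \sum_(g <- rs) (p g - (k g)%:R / M%:R))%R.
  by rewrite -big_split; apply: ler_sum => g _; apply: hb.
move: hs; rewrite !sumrB -!mulr_suml -KE -/q divff ?gt_eqF // -/P.
rewrite /dl in hq; lra.
Qed.
End Approx2.

Local Open Scope ereal_scope.

Section Exist.
Variables (G : groupType) (dec : nat -> G).
Hypothesis dec_surj : forall g, exists m, dec m = g.
Variables (d : measure_display) (X : measurableType d) (act : G -> X -> X).
Hypothesis act1 : forall x, act 1%g x = x.
Hypothesis actM : forall g h x, act (g * h)%g x = act g (act h x).
Hypothesis hstab : forall x : X, uniformly_coamenable (stabilizer act x).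

Lemma eps_gt0 i : (0 < eps_ i)%R.
Proof. by rewrite /eps_ invr_gt0 ltr0n. Qed.

Lemma eps_le1 i : (eps_ i <= 1)%R.
Proof. by rewrite /eps_ invf_le1 // ?ler1n // ltr0n. Qed.

Lemma exists_good i x : exists n, Good dec act i (decL n) x.
Proof.
pose S := [set dec j | j in `I_(i.+1)].
have finS : finite_set S by apply: finite_image; apply: finite_II.
have e0 := eps_gt0 i; have e1 := eps_le1 i.
have e4 : (0 < eps_ i / 4)%R by lra.
have [p [pp hR]] := hstab x finS (RltP e4).
have [l [K0 hl]] := approx dec_surj pp e4 (ltac:(lra) : (eps_ i / 4 <= 1)%R).
exists (pickle l); rewrite decL_pickle; split => // m j ji.
set z := act (dec m) x.
rewrite /Dl.
have t1 := fin_contr dec act l z pp.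
have t2 := fin_contr dec act l (act (dec j) z) pp.
rewrite ell1R_sym in t2.
have t3 : ell1R (muR act p z) (muR act p (act (dec j) z)) < (eps_ i / 4)%:E.
  apply: le_lt_trans (transfer act1 actM x (dec m) (dec j) pp) _.
  apply: hR; first by exists j => //=.
  by exists (dec m).
apply: le_lt_trans (ell1R_tri _ (muR act p z) _) _.
apply: le_lt_trans (leeD (lexx _) (ell1R_tri _ (muR act p (act (dec j) z)) _)) _.
apply: (@lt_le_trans _ _ (eps_ i / 4 + (eps_ i / 4 + eps_ i / 4))%R%:E).
  rewrite !EFinD; apply: lteD; first exact: le_lt_trans t1 hl.
  by apply: lteD => //; exact: le_lt_trans t2 hl.
by rewrite lee_fin; lra.
Qed.
End Exist.

Local Open Scope ereal_scope.

Section Meas1.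
Variables (d : measure_display) (X : measurableType d) (f : X -> RR).
Hypothesis f_inj : injective f.
Hypothesis f_meas : measurable_fun [set: X] f.

Lemma meas_eqset (d' : measure_display) (T : measurableType d') (al be : T -> X) :
  measurable_fun [set: T] al -> measurable_fun [set: T] be ->
  measurable [set t | al t = be t].
Proof.
move=> mal mbe.
have mh : measurable_fun [set: T] (fun t => f (al t) == f (be t)).
  apply: measurable_fun_eqr; exact: measurableT_comp.
have := mh measurableT [set true] I; rewrite setTI.
congr measurable; apply/seteqP; split => t /=.
- by move/eqP/f_inj.
- by move=> ->; rewrite eqxx.
Qed.

Lemma meas_boolR (d' : measure_display) (T : measurableType d') (b : T -> bool) :
  measurable [set t | b t] -> measurable_fun [set: T] (fun t => (b t)%:R : RR).
Proof.
move=> mb; have := @measurable_indic _ T RR setT _ mb.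
congr measurable_fun; apply: funext => t; rewrite indicE.
have [bt|bt] := boolP (b t); first by rewrite mem_set.
by rewrite memNset //; exact/negP.
Qed.

Lemma meas_eqR (d' : measure_display) (T : measurableType d') (al be : T -> X) :
  measurable_fun [set: T] al -> measurable_fun [set: T] be ->
  measurable_fun [set: T] (fun t => (al t == be t)%:R : RR).
Proof.
move=> mal mbe; apply: meas_boolR.
have := meas_eqset mal mbe; congr measurable; apply/seteqP; split => t /=.
- by move=> ->.
- by move/eqP.
Qed.

End Meas1.

Section Meas2.
Variables (G : groupType) (dec : nat -> G).
Variables (d : measure_display) (X : measurableType d) (act : G -> X -> X).
Variable (f : X -> RR).
Hypothesis f_inj : injective f.
Hypothesis f_meas : measurable_fun [set: X] f.
Hypothesis act_meas : forall g, measurable_fun [set: X] (act g).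

Lemma meas_nu_pair l : measurable_fun [set: X * X] (fun xy => nu dec act l xy.1 xy.2).
Proof.
rewrite /nu; apply: measurable_sum => e.
apply: (@measurable_funM _ _ _ _ (fun _ => _) (fun xy => (act (dec e.1) xy.1 == xy.2)%:R)).
  exact: measurable_cst.
apply: (meas_eqR f_inj f_meas); last exact: measurable_snd.
exact: measurableT_comp (act_meas _) measurable_fst.
Qed.

Lemma meas_nu_at l (al be : X -> X) : measurable_fun [set: X] al ->
  measurable_fun [set: X] be ->
  measurable_fun [set: X] (fun z => nu dec act l (be z) (al z)).
Proof.
move=> mal mbe; rewrite /nu; apply: measurable_sum => e.
apply: (@measurable_funM _ _ _ _ (fun _ => _) (fun z => (act (dec e.1) (be z) == al z)%:R)).
  exact: measurable_cst.
apply: (meas_eqR f_inj f_meas) => //.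
exact: measurableT_comp (act_meas _) mbe.
Qed.

Fixpoint usum (F : X -> RR) (s : seq X) : RR :=
  if s is x :: s' then ((x \notin s')%:R * F x + usum F s')%R else 0%R.

Lemma usumE F s : usum F s = (\sum_(w <- undup s) F w)%R.
Proof.
elim: s => [|x s IH] /=; first by rewrite big_nil.
case: ifP => xs /=; first by rewrite mul0r add0r IH.
by rewrite big_cons mul1r IH.
Qed.

Lemma esum_usum (phi : X -> RR) s : (forall w, w \notin s -> phi w = 0%R) ->
  \esum_(w in [set: X]) (`|phi w|%R)%:E = (usum (fun w => `|phi w|%R) s)%:E.
Proof.
move=> h0; rewrite (esumID [set` s]); last by move=> *; rewrite lee_fin.
rewrite !setTI [X in _ + X]esum1 ?adde0; last first.
  by move=> w ws; rewrite h0 ?normr0 //; apply/negP.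
rewrite esum_fset; last 2 first.
- exact: finite_seq.
- by move=> *; rewrite lee_fin.
have -> : [set` s] = [set` undup s].
  by apply/seteqP; split => w /=; rewrite mem_undup.
by rewrite -fsbig_seq ?undup_uniq // sumEFin usumE.
Qed.

Lemma meas_inmap (al : X -> X) (rest : seq (X -> X)) :
  measurable_fun [set: X] al -> (forall be, be \in rest -> measurable_fun [set: X] be) ->
  measurable [set z | al z \in map (fun be => be z) rest].
Proof.
move=> mal; elim: rest => [|be rest IH] hr /=.
  by rewrite (_ : [set z | _] = set0) //; apply/seteqP; split => z.
rewrite (_ : [set z | _] = [set z | al z = be z] `|` [set z | al z \in map (fun be => be z) rest]).
  apply: measurableU; last by apply: IH => b bi; apply: hr; rewrite inE bi orbT.
  by apply: (meas_eqset f_inj f_meas) => //; apply: hr; rewrite inE eqxx.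
apply/seteqP; split => z /=; rewrite inE.
- by case/orP => [/eqP|]; [left|right].
- by case => [->|->]; rewrite ?eqxx ?orbT.
Qed.

Lemma meas_usum (Phi : X -> X -> RR) (als : seq (X -> X)) :
  (forall al, al \in als -> measurable_fun [set: X] al) ->
  (forall al, measurable_fun [set: X] al -> measurable_fun [set: X] (fun z => Phi z (al z))) ->
  measurable_fun [set: X] (fun z => usum (Phi z) (map (fun al => al z) als)).
Proof.
move=> hals hPhi; elim: als hals => [|al rest IH] hals /=.
  exact: measurable_cst.
apply: measurable_funD; last by apply: IH => b bi; apply: hals; rewrite inE bi orbT.
have mal : measurable_fun [set: X] al by apply: hals; rewrite inE eqxx.
apply: (@measurable_funM _ _ _ _ (fun z => (al z \notin map (fun be => be z) rest)%:R) (fun z => Phi z (al z))); last exact: hPhi.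
apply: meas_boolR.
have -> : [set z | al z \notin map (fun be => be z) rest] =
    ~` [set z | al z \in map (fun be => be z) rest].
  by apply/seteqP; split => z /=; move/negP.
by apply: measurableC; apply: meas_inmap => // b bi; apply: hals; rewrite inE bi orbT.
Qed.

End Meas2.

Local Open Scope ereal_scope.

Section Meas3.
Variables (G : groupType) (dec : nat -> G).
Hypothesis dec_surj : forall g, exists m, dec m = g.
Variables (d : measure_display) (X : measurableType d) (act : G -> X -> X).
Variable (f : X -> RR).
Hypothesis f_inj : injective f.
Hypothesis f_meas : measurable_fun [set: X] f.
Hypothesis act_meas : forall g, measurable_fun [set: X] (act g).

Definition alphas (l : seq (nat * nat)) (s : G) : seq (X -> X) :=
  map (fun e => act (dec e.1)) l ++ map (fun e => fun z => act (dec e.1) (act s z)) l.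
Definition Phi (l : seq (nat * nat)) (s : G) (z w : X) : RR := `|nu dec act l z w - nu dec act l (act s z) w|%R.
Definition DF (l : seq (nat * nat)) (s : G) (z : X) : RR := usum (Phi l s z) (map (fun al => al z) (alphas l s)).

Lemma Dl_DF l z s : Dl dec act l z s = (DF l s z)%:E.
Proof.
rewrite /Dl ell1RE /DF /Phi; apply: esum_usum => w wn.
rewrite !nu_off ?subr0 // => e el hw; move/negP: wn; apply;
  rewrite map_cat mem_cat -!map_comp; apply/orP.
- by right; apply/mapP; exists e.
- by left; apply/mapP; exists e.
Qed.

Lemma meas_DF l s : measurable_fun [set: X] (DF l s).
Proof.
apply: (meas_usum f_inj f_meas).
- move=> al; rewrite mem_cat => /orP[] /mapP [e _ ->].
  + exact: act_meas.
  + exact: measurableT_comp (act_meas _) (act_meas _).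
- move=> al mal; rewrite /Phi.
  apply: measurableT_comp => //; apply: measurable_funB.
  + have h := meas_nu_at dec f_inj f_meas act_meas l mal (@measurable_id _ _ setT).
    exact: h.
  + have h := meas_nu_at dec f_inj f_meas act_meas l mal (act_meas s).
    exact: h.
Qed.

End Meas3.

Section Meas4.
Variables (G : groupType) (dec : nat -> G).
Hypothesis dec_surj : forall g, exists m, dec m = g.
Variables (d : measure_display) (X : measurableType d) (act : G -> X -> X).
Variable (f : X -> RR).
Hypothesis f_inj : injective f.
Hypothesis f_meas : measurable_fun [set: X] f.
Hypothesis act_meas : forall g, measurable_fun [set: X] (act g).
Hypothesis hex : forall i x, exists n, Good dec act i (decL n) x.

Lemma meas_Dset l m j c :
  measurable [set x | Dl dec act l (act (dec m) x) (dec j) < c%:E].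
Proof.
have h0 := measurable_fun_ltr (meas_DF dec f_inj f_meas act_meas l (dec j))
  (measurable_cst c).
have h1 := h0 measurableT [set true] I.
have h2 := act_meas (dec m) measurableT h1.
rewrite setTI in h2; move: h2; congr measurable; apply/seteqP; split => x /=.
- by move=> [_ h]; rewrite Dl_DF lte_fin h.
- by rewrite Dl_DF lte_fin => h; split.
Qed.

Lemma meas_Good i l : measurable [set x | Good dec act i l x].
Proof.
case: (ltrP 0 (Kw l)) => K; last first.
  rewrite (_ : [set x | _] = set0) //; apply/seteqP; split => x //= [K' _].
  by move: K; rewrite leNgt K'.
rewrite (_ : [set x | _] = \bigcap_m \bigcap_j
    [set x | (j <= i)%N -> Dl dec act l (act (dec m) x) (dec j) < (eps_ i)%:E]).
  apply: bigcapT_measurable => m; apply: bigcapT_measurable => j.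
  have [ji|ji] := leqP j i.
  - rewrite (_ : [set x | _] = [set x | Dl dec act l (act (dec m) x) (dec j) < (eps_ i)%:E]).
      exact: meas_Dset.
    by apply/seteqP; split => x /=; [apply | move=> h _].
  - by rewrite (_ : [set x | _] = setT) //; apply/seteqP; split => x //= _ ij.
apply/seteqP; split => x /=.
- by move=> [_ h] m _ j _ ji; apply: h.
- by move=> h; split => // m j ji; apply: (h m I j I).
Qed.

Lemma kk_char i x n : kk dec act i x = n <->
  Good dec act i (decL n) x /\ (forall m, (m < n)%N -> ~ Good dec act i (decL m) x).
Proof.
have [g1 m1] := kk_spec (hex i x); split.
- move=> <-; split => // m mk gm; have := m1 m gm; rewrite leqNgt mk //.
- move=> [gn hm]; apply/eqP; rewrite eqn_leq m1 //=.
  by rewrite leqNgt; apply/negP => h; apply: (hm _ h g1).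
Qed.

Lemma meas_Kset i n : measurable [set x | kk dec act i x = n].
Proof.
rewrite (_ : [set x | _] = [set x | Good dec act i (decL n) x] `&`
   \bigcap_m [set x | (m < n)%N -> ~ Good dec act i (decL m) x]).
  apply: measurableI; first exact: meas_Good.
  apply: bigcapT_measurable => m; have [mn|mn] := ltnP m n.
  - rewrite (_ : [set x | _] = ~` [set x | Good dec act i (decL m) x]).
      by apply: measurableC; apply: meas_Good.
    by apply/seteqP; split => x /=; [apply | move=> h _].
  - by rewrite (_ : [set x | _] = setT) //; apply/seteqP; split => x //= _ mn'.
apply/seteqP; split => x /=.
- by move/kk_char => [g h]; split => // m _; apply: h.
- by move=> [g h]; apply/kk_char; split => // m mn; apply: (h m I).
Qed.

Lemma meas_E : measurable (orbit_eqrel act).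
Proof.
rewrite (_ : orbit_eqrel act = \bigcup_m [set xy | act (dec m) xy.1 = xy.2]).
  apply: bigcupT_measurable => m; apply: (meas_eqset f_inj f_meas).
  - exact: measurableT_comp (act_meas _) measurable_fst.
  - exact: measurable_snd.
apply/seteqP; split => -[x y] /=.
- by move=> [g hg]; have [m hm] := dec_surj g; exists m => //; rewrite hm.
- by move=> [m _ h]; exists (dec m).
Qed.

Lemma meas_p i : measurable_fun (orbit_eqrel act)
  (fun xy : X * X => nu dec act (decL (kk dec act i xy.1)) xy.1 xy.2).
Proof.
move=> mE Y mY.
rewrite (_ : _ `&` _ = \bigcup_n (orbit_eqrel act `&`
   (([set x | kk dec act i x = n] `*` setT) `&`
    ((fun xy : X * X => nu dec act (decL n) xy.1 xy.2) @^-1` Y)))).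
  apply: bigcupT_measurable => n; apply: measurableI => //.
  apply: measurableI; first by apply: measurableX => //; exact: meas_Kset.
  have := meas_nu_pair dec f_inj f_meas act_meas (decL n) measurableT mY.
  by rewrite setTI.
apply/seteqP; split => -[x y] /=.
- by move=> [hE hY]; exists (kk dec act i x) => //.
- by move=> [n _ [hE [[/= <- _] hY]]].
Qed.

End Meas4.

Local Open Scope ereal_scope.

Lemma eps_mono i j : (i <= j)%N -> (eps_ j <= eps_ i)%R.
Proof.
by move=> ij; rewrite /eps_ lef_pV2 ?posrE ?ltr0n // ler_nat ltnS.
Qed.

Theorem lemma4p4 (G : groupType) (G_countable : countable [set: G])
    (d : measure_display) (X : measurableType d) (X_std : standard_borel X)
    (act : G -> X -> X) (act_borel : borel_action act)
    (hstab : forall x : X, uniformly_coamenable (stabilizer act x)) :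
  borel_amenable (orbit_eqrel act).
Proof.
move/countable_injP: G_countable => [enc encI].
pose dec (n : nat) : G :=
  if pselect (exists g, enc g = n) is left e then projT1 (cid e) else 1%g.
have dec_surj : forall g, exists m, dec m = g.
  move=> g; exists (enc g); rewrite /dec; case: pselect => [e|]; last first.
    by case; exists g.
  case: cid => g' /= h; apply: encI => //; rewrite inE //.
case: act_borel => act1 [actM act_meas].
case: X_std => f [finj [fmeas _]].
have hex := exists_good dec_surj act1 actM hstab.
exists (fun i x y => nu dec act (decL (kk dec act i x)) x y).
split; [|split].
- move=> i x; have [g1 _] := kk_spec (hex i x); split; [|split].
  + by move=> y; apply: nu_ge0.
  + move=> y nE; apply: nu_off => e _ h; apply: nE; by exists (dec e.1).
  + by apply: esum_nu; [case: g1 | move=> e _; exists (dec e.1)].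
- move=> x y [h /= hxy] eps eps0.
  have [m0 hm0] := dec_surj h.
  have [m1 hm1] := dec_surj 1%g.
  pose N0 := Num.truncn (eps^-1).
  have hN0 : (eps_ N0 < eps)%R.
    rewrite /eps_ -[X in (_ < X)%R]invrK ltf_pV2 ?posrE ?invr_gt0 ?ltr0n //.
    exact: truncnS_gt.
  exists (maxn N0 m0) => i hi.
  have iN0 : (N0 <= i)%N by apply: leq_trans hi; apply: leq_maxl.
  have im0 : (m0 <= i)%N by apply: leq_trans hi; apply: leq_maxr.
  rewrite -hxy kk_act //.
  have [[_ g2] _] := kk_spec (hex i x).
  have := g2 m1 m0 im0; rewrite hm1 act1 hm0 => hD.
  apply: (lt_le_trans hD); rewrite lee_fin.
  exact: le_trans (eps_mono iN0) (ltW hN0).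
- move=> i; exact: (meas_p finj fmeas act_meas hex i).
Qed.
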